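(* Let $x_1\ge x_2\ge\cdots\ge x_n$ be integers and $q\ge1$ an integer, and suppose there is a set $S\subseteq[n]$ of size $2q$ such that all $x_i$ with $i\in S$ are equal. Increase $x_i$ by $1$ for $q$ of the indices $i\in S$ and decrease $x_i$ by $1$ for the other $q$ indices in $S$. Then $\Phi=\sum_{i=1}^n x_i^2$ increases by exactly $2q$, and $\Psi = n\sum_i|x_i| + \sum_{i<j}|x_i-x_j|$ increases by at least $2q^2$. *)

(* Defs.v *)
From HB Require Import structures.
From mathcomp Require Import all_boot all_order all_algebra.
Set Implicit Arguments. Unset Strict Implicit. Unset Printing Implicit Defensive.
Import Order.TTheory GRing.Theory Num.Theory.
Local Open Scope ring_scope.

Definition Phi (n : nat) (x : 'I_n -> int) : int := \sum_(i < n) x i ^+ 2.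

Definition Psi (n : nat) (x : 'I_n -> int) : int :=
  n%:R * (\sum_(i < n) `|x i|) + \sum_(i < n) \sum_(j < n | (i < j)%N) `|x i - x j|.

Definition move (n : nat) (S T : {set 'I_n}) (x : 'I_n -> int) : 'I_n -> int :=
  fun i => if i \in T then x i + 1 else if i \in S then x i - 1 else x i.

(* Main.v *)
Require Import Defs.
From HB Require Import structures.
From mathcomp Require Import all_boot all_order all_algebra.
From mathcomp Require Import zify ring.
Import Order.TTheory GRing.Theory Num.Theory.
Local Open Scope ring_scope.

Lemma sum_ind (n : nat) (A : {set 'I_n}) :
  \sum_(i < n) ((i \in A)%:R : int) = #|A|%:R.
Proof.
rewrite -[RHS]/(1 *+ #|A|) -sumr_const [RHS]big_mkcond /=.
by apply: eq_bigr => i _; case: (i \in A).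
Qed.

Lemma sym_sum (n : nat) (f : 'I_n -> 'I_n -> int)
  (fs : forall i j, f i j = f j i) (f0 : forall i, f i i = 0) :
  2 * \sum_(i < n) \sum_(j < n | (i < j)%N) f i j = \sum_(i < n) \sum_(j < n) f i j.
Proof.
have E : \sum_(i < n) \sum_(j < n) f i j =
  \sum_(i < n) \sum_(j < n | (i < j)%N) f i j +
  \sum_(i < n) \sum_(j < n | (j < i)%N) f i j.
  rewrite -big_split /=; apply: eq_bigr => i _.
  rewrite (bigID (fun j : 'I_n => (i < j)%N)) /=; congr (_ + _).
  rewrite (bigD1 i) ?ltnn //= f0 add0r; apply: eq_bigl => j.
  by rewrite -val_eqE /=; lia.
have E2 : \sum_(i < n) \sum_(j < n | (j < i)%N) f i j =
          \sum_(i < n) \sum_(j < n | (i < j)%N) f i j.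
  rewrite (eq_bigr (fun i : 'I_n => \sum_(j < n) if (j < i)%N then f i j else 0)); last first.
    by move=> i _; rewrite big_mkcond.
  rewrite exchange_big /=; apply: eq_bigr => i _; rewrite [RHS]big_mkcond /=.
  by apply: eq_bigr => j _; rewrite fs.
by rewrite E E2 mulr2n mulrDl mul1r.
Qed.

Lemma L1 (u c : int) : `|u| + c * Num.sg u <= `|u + c|.
Proof.
have [h|h|->] := ltrgtP u 0; [rewrite ltr0_sg // | rewrite gtr0_sg // | rewrite sgr0];
  rewrite ?mulrN1 ?mulr1 ?mulr0; lia.
Qed.

Lemma L2 (u ci cj : int) (hci : ci = 1 \/ ci = 0 \/ ci = -1)
  (hcj : cj = 1 \/ cj = 0 \/ cj = -1) (h : ci != 0 -> cj != 0 -> u = 0) :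
  `|u| + (Num.sg u * ci - Num.sg u * cj + ci ^+ 2 * cj ^+ 2 - ci * cj)
   <= `|u + (ci - cj)|.
Proof.
move: h; case: hci => [->|[->|->]]; case: hcj => [->|[->|->]] /= => h; rewrite ?expr2;
  try (have -> : u = 0 by apply: h; rewrite ?oppr_eq0 oner_eq0);
  (have [h'|h'|->] := ltrgtP u 0; [rewrite ltr0_sg // | rewrite gtr0_sg // | rewrite sgr0]);
  rewrite ?mulrN1 ?mulr1 ?mulr0 ?mul0r ?mul1r ?mulN1r ?opprK; lia.
Qed.

Theorem proposition6p2 (n q : nat) (x : 'I_n -> int) (S T : {set 'I_n})
  (hsort : forall i j : 'I_n, (i <= j)%N -> x j <= x i)
  (hq : (1 <= q)%N)
  (hS : #|S| = (2 * q)%N)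
  (heq : forall i j, i \in S -> j \in S -> x i = x j)
  (hTS : T \subset S)
  (hT : #|T| = q) :
  Phi (move S T x) = Phi x + (2 * q)%:R /\
  Psi x + (2 * q ^ 2)%:R <= Psi (move S T x).
Proof.
pose c := fun i => if i \in T then 1 else if i \in S then -1 else (0:int).
have hy : forall i, move S T x i = x i + c i.
  by move=> i; rewrite /move /c; case: (i \in T); case: (i \in S); rewrite ?addr0.
have cS : forall i, c i != 0 -> i \in S.
  move=> i; rewrite /c; case iT: (i \in T); first by rewrite (subsetP hTS).
  by case: (i \in S).
have cv : forall i, c i = 1 \/ c i = 0 \/ c i = -1.
  by move=> i; rewrite /c; case: (i \in T); case: (i \in S); auto.
have c2 : forall i, c i ^+ 2 = (i \in S)%:R.
  move=> i; rewrite /c; case iT: (i \in T); first by rewrite (subsetP hTS).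
  by case: (i \in S).
have cT : forall i, c i = (i \in T)%:R * 2 - (i \in S)%:R.
  move=> i; rewrite /c; case iT: (i \in T); first by rewrite (subsetP hTS).
  by case: (i \in S).
have sumc : \sum_(i < n) c i = 0.
  rewrite (eq_bigr _ (fun i _ => cT i)) sumrB -mulr_suml !sum_ind hT hS; lia.
have sumc2 : \sum_(i < n) c i ^+ 2 = (2 * q)%:R.
  by rewrite (eq_bigr _ (fun i _ => c2 i)) sum_ind hS.
have key : forall H : int -> int, \sum_(i < n) c i * H (x i) = 0.
  move=> H.
  have /card_gt0P [k kS] : (0 < #|S|)%N by rewrite hS; lia.
  transitivity (\sum_(i < n) c i * H (x k)).
    apply: eq_bigr => i _; case: (c i =P 0) => [->|/eqP /cS iS].
      by rewrite !mul0r.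
    by rewrite (heq i k).
  by rewrite -mulr_suml sumc mul0r.
split.
  rewrite /Phi (eq_bigr (fun i => x i ^+ 2 + 2 * (c i * x i) + c i ^+ 2));
    last by move=> i _; rewrite hy; ring.
  have k1 := key (fun t => t); rewrite /= in k1.
  by rewrite !big_split /= -mulr_sumr k1 sumc2 mulr0 addr0.
set y := move S T x.
have hA : \sum_(i < n) `|x i| <= \sum_(i < n) `|y i|.
  have k2 := key (fun t => Num.sg t); rewrite /= in k2.
  have -> : \sum_(i < n) `|x i| = \sum_(i < n) (`|x i| + c i * Num.sg (x i)).
    by rewrite big_split /= k2 addr0.
  by apply: ler_sum => i _; rewrite /y hy; apply: L1.
pose P (z : 'I_n -> int) := \sum_(i < n) \sum_(j < n | (i < j)%N) `|z i - z j|.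
have hP : P x + (2 * q ^ 2)%:R <= P y.
  have E : 2 * (P y - P x) = \sum_(i < n) \sum_(j < n) (`|y i - y j| - `|x i - x j|).
    rewrite -sym_sum; last first.
      by move=> i; rewrite !subrr.
      by move=> i j; rewrite (distrC (y i)) (distrC (x i)).
    congr (2 * _); rewrite /P -sumrB; apply: eq_bigr => i _; by rewrite sumrB.
  pose Q i j := Num.sg (x i - x j) * c i - Num.sg (x i - x j) * c j
                + c i ^+ 2 * c j ^+ 2 - c i * c j.
  have hQ : \sum_(i < n) \sum_(j < n) Q i j
            <= \sum_(i < n) \sum_(j < n) (`|y i - y j| - `|x i - x j|).
    apply: ler_sum => i _; apply: ler_sum => j _.
    rewrite lerBrDl /y !hy /Q.
    have -> : x i + c i - (x j + c j) = (x i - x j) + (c i - c j) by ring.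
    apply: L2 => // ci0 cj0; apply/eqP; rewrite subr_eq0; apply/eqP.
    by apply: heq; apply: cS.
  have s1 : \sum_(i < n) \sum_(j < n) Num.sg (x i - x j) * c i = 0.
    rewrite -[RHS](key (fun t => \sum_(j < n) Num.sg (t - x j))).
    apply: eq_bigr => i _; rewrite mulr_sumr; apply: eq_bigr => j _; by rewrite mulrC.
  have s2 : \sum_(i < n) \sum_(j < n) Num.sg (x i - x j) * c j = 0.
    rewrite exchange_big /= -[RHS](key (fun t => \sum_(i < n) Num.sg (x i - t))).
    apply: eq_bigr => i _; rewrite mulr_sumr; apply: eq_bigr => j _; by rewrite mulrC.
  have s3 : \sum_(i < n) \sum_(j < n) c i ^+ 2 * c j ^+ 2 = (2 * q)%:R * (2 * q)%:R.
    by rewrite -sumc2 big_distrlr.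
  have s4 : \sum_(i < n) \sum_(j < n) c i * c j = 0.
    have -> : \sum_(i < n) \sum_(j < n) c i * c j = (\sum_(i < n) c i) * (\sum_(j < n) c j).
      by rewrite big_distrlr.
    by rewrite sumc mul0r.
  have sQ : \sum_(i < n) \sum_(j < n) Q i j = (2 * q)%:R * (2 * q)%:R.
    rewrite (eq_bigr (fun i => \sum_(j < n) Num.sg (x i - x j) * c i
       - \sum_(j < n) Num.sg (x i - x j) * c j
       + \sum_(j < n) c i ^+ 2 * c j ^+ 2 - \sum_(j < n) c i * c j)); last first.
      by move=> i _; rewrite -!sumrB -big_split /= -sumrB.
    by rewrite sumrB big_split sumrB /= s1 s2 s3 s4; ring.
  move: hQ; rewrite sQ -E => hQ.
  have : 4 * (q%:R : int) ^+ 2 <= 2 * (P y - P x).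
    apply: le_trans hQ; rewrite le_eqVlt; apply/orP; left; apply/eqP; rewrite !natrM; ring.
  rewrite natrM natrX; lia.
rewrite /Psi -/(P x) -/(P y) -addrA.
apply: lerD => //.
by apply: ler_wpM2l => //; apply: ler0n.
Qed.
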